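(* Let $(X_c,\Lambda_c)\in \mathbb{K}^{n \times p} \times \mathbb{K}^{p \times p}$ be an invariant pair of $Q(\lambda)=\lambda^2 M+\lambda D+K \in \mathbb{Q}_n(\star,\epsilon_1,\epsilon_2)$ with $\mathrm{rank}(X_c)=p \leq n$. Suppose $X_c=\begin{bmatrix}Q_1& Q_2\end{bmatrix} \begin{bmatrix}R\\ 0\end{bmatrix}$ where $R\in \mathbb{K}^{p\times p}$ is nonsingular and $Q=\begin{bmatrix}Q_1& Q_2\end{bmatrix} \in\mathbb{K}^{n\times n}$ satisfies $Q^{\star} Q=QQ^{\star}=I_n$. Let $\Lambda_a \in \mathbb{K}^{p \times p}$. Set $$\Delta M=Q \begin{bmatrix}-Q_1^{\star} M Q_1& \epsilon_1 M_{12}^\star \\ M_{12}& M_{22}\end{bmatrix}Q^{\star},\quad \Delta D=Q \begin{bmatrix}-Q_1^{\star} D Q_1& \epsilon_2 D_{12}^\star \\ D_{12}& D_{22}\end{bmatrix}Q^{\star},\quad \Delta K=Q \begin{bmatrix}-Q_1^{\star} K Q_1& \epsilon_1 K_{12}^\star \\ K_{12}& K_{22}\end{bmatrix}Q^{\star}$$ with $M_{12}=[Z_1-WS(\Lambda_a^2)^*]R^{-1}$, $D_{12}=[Z_2-WS \Lambda_a^*]R^{-1}$, $K_{12}=[Z_3-WS]R^{-1}$, where $M_{22}=\epsilon_1 M_{22}^\star$, $D_{22}=\epsilon_2 D_{22}^\star$, $K_{22}=\epsilon_1 K_{22}^\star$ are arbitrary matrices of order $(n-p) \times (n-p)$, $W=Q_2^{\star}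 MX_c(\Lambda_a^2-\Lambda_c^2)+Q_2^{\star} DX_c(\Lambda_a-\Lambda_c)+Z_1\Lambda_a^2+Z_2\Lambda_a+Z_3$, $S=((\Lambda_a^2)^*\Lambda_a^2+\Lambda_a^* \Lambda_a+I_p)^{-1}$, and $Z_1,Z_2,Z_3 \in \mathbb{K}^{(n-p) \times p}$ are arbitrary. Then $(X_c,\Lambda_a)$ is an invariant pair of $Q_\Delta (\lambda)=\lambda^2 (M+\Delta M)+\lambda (D+\Delta D)+ (K+\Delta K) \in \mathbb{Q}_n(\star,\epsilon_1,\epsilon_2)$.
   Context: $\mathbb{K}\in\{\mathbb{R},\mathbb{C}\}$, $\star\in\{*,T\}$ (conjugate transpose or transpose), $\epsilon_1,\epsilon_2\in\{1,-1\}$. $\mathbb{Q}_n(\star,\epsilon_1,\epsilon_2)$ is the set of quadratic matrix polynomials $\lambda^2M+\lambda D+K\in\mathbb{K}^{n\times n}[\lambda]$ with $M^\star=\epsilon_1M$, $D^\star=\epsilon_2D$, $K^\star=\epsilon_1K$. For $X\in\mathbb{K}^{n\times p}$, $\Lambda\in\mathbb{K}^{p\times p}$, $(X,\Lambda)$ is an invariant pair of $\lambda^2M+\lambda D+K$ if $MX\Lambda^2+DX\Lambda+KX=0$. *)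

(* Defs.v *)
From HB Require Import structures.
From mathcomp Require Import all_boot all_algebra.
From mathcomp Require Import reals complex.
Set Implicit Arguments. Unset Strict Implicit. Unset Printing Implicit Defensive.
Import GRing.Theory Num.Theory.
Local Open Scope ring_scope.

(* Generic setting: a field F (either R or C = R[i]) together with its
   conjugation cj (identity on R, complex conjugation on C). *)
Section Generic.
Variable F : fieldType.
Variable cj : F -> F.

Definition ctr m n (A : 'M[F]_(m, n)) : 'M[F]_(n, m) := (map_mx cj A)^T.

Definition startr (conjt : bool) m n (A : 'M[F]_(m, n)) : 'M[F]_(n, m) :=
  if conjt then ctr A else A^T.

(* epsilon in {1,-1}, encoded by a boolean: sgn false = 1, sgn true = -1 *)
Definition sgn (e : bool) : F := (-1) ^+ e.

Definition in_Qn (conjt e1 e2 : bool) n (M D K : 'M[F]_n) : Prop :=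
  [/\ startr conjt M = sgn e1 *: M,
      startr conjt D = sgn e2 *: D &
      startr conjt K = sgn e1 *: K].

Definition invariant_pair n p (M D K : 'M[F]_n) (X : 'M[F]_(n, p))
    (L : 'M[F]_p) : Prop :=
  M *m X *m (L *m L) + D *m X *m L + K *m X = 0.

(* The statement of Theorem 3.5, for K = F with conjugation cj.
   Dimensions: p, q with n = p + q (so q = n - p and p <= n).
   Q = [Q1 Q2] with Q1 = lsubmx Q (n x p), Q2 = rsubmx Q (n x q). *)
Definition Theorem35 : Prop :=
  forall (conjt e1 e2 : bool) (p q : nat)
    (M D K : 'M[F]_(p + q)) (Xc : 'M[F]_(p + q, p)) (Lc La : 'M[F]_p)
    (Rm : 'M[F]_p) (Q : 'M[F]_(p + q))
    (M22 D22 K22 : 'M[F]_q) (Z1 Z2 Z3 : 'M[F]_(q, p)),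
  in_Qn conjt e1 e2 M D K ->
  invariant_pair M D K Xc Lc ->
  \rank Xc = p ->
  Xc = Q *m col_mx Rm 0 ->
  Rm \in unitmx ->
  startr conjt Q *m Q = 1%:M ->
  Q *m startr conjt Q = 1%:M ->
  startr conjt M22 = sgn e1 *: M22 ->
  startr conjt D22 = sgn e2 *: D22 ->
  startr conjt K22 = sgn e1 *: K22 ->
  let Q1 : 'M[F]_(p + q, p) := lsubmx Q in
  let Q2 : 'M[F]_(p + q, q) := rsubmx Q in
  let La2 := La *m La in
  let Lc2 := Lc *m Lc in
  let W := startr conjt Q2 *m M *m Xc *m (La2 - Lc2)
           + startr conjt Q2 *m D *m Xc *m (La - Lc)
           + Z1 *m La2 + Z2 *m La + Z3 in
  let S := invmx (ctr La2 *m La2 + ctr La *m La + 1%:M) in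
  let M12 := (Z1 - W *m S *m ctr La2) *m invmx Rm in
  let D12 := (Z2 - W *m S *m ctr La) *m invmx Rm in
  let K12 := (Z3 - W *m S) *m invmx Rm in
  let dM := Q *m block_mx (- (startr conjt Q1 *m M *m Q1))
                          (sgn e1 *: startr conjt M12) M12 M22
              *m startr conjt Q in
  let dD := Q *m block_mx (- (startr conjt Q1 *m D *m Q1))
                          (sgn e2 *: startr conjt D12) D12 D22
              *m startr conjt Q in
  let dK := Q *m block_mx (- (startr conjt Q1 *m K *m Q1))
                          (sgn e1 *: startr conjt K12) K12 K22
              *m startr conjt Q in
  invariant_pair (M + dM) (D + dD) (K + dK) Xc La /\
  in_Qn conjt e1 e2 (M + dM) (D + dD) (K + dK).

End Generic.

(* Main.v *)
Require Import Defs.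
From HB Require Import structures.
From mathcomp Require Import all_boot all_order all_algebra.
From mathcomp Require Import reals complex.
Import Order.TTheory GRing.Theory Num.Theory.
Set Implicit Arguments. Unset Strict Implicit. Unset Printing Implicit Defensive.
Local Open Scope ring_scope.

Section Gen.
Variable F : numFieldType.
Variable cj : {rmorphism F -> F}.
Hypothesis cjK : involutive cj.
Hypothesis cj_ge0 : forall x, 0 <= x * cj x.

Lemma ctrM m n k (A : 'M[F]_(m, n)) (B : 'M[F]_(n, k)) :
  ctr cj (A *m B) = ctr cj B *m ctr cj A.
Proof. by rewrite /ctr map_mxM trmx_mul. Qed.

Lemma ctrK m n (A : 'M[F]_(m, n)) : ctr cj (ctr cj A) = A.
Proof.
rewrite /ctr map_trmx trmxK; apply/matrixP => i j; by rewrite !mxE cjK.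
Qed.

Notation st c := (startr cj c).

Lemma stM c m n k (A : 'M[F]_(m, n)) (B : 'M[F]_(n, k)) :
  st c (A *m B) = st c B *m st c A.
Proof. by case: c; rewrite /startr ?ctrM ?trmx_mul. Qed.

Lemma stK c m n (A : 'M[F]_(m, n)) : st c (st c A) = A.
Proof. by case: c; rewrite /startr ?ctrK ?trmxK. Qed.

Lemma stD c m n (A B : 'M[F]_(m, n)) : st c (A + B) = st c A + st c B.
Proof. by case: c; rewrite /startr /ctr ?map_mxD linearD. Qed.

Lemma stN c m n (A : 'M[F]_(m, n)) : st c (- A) = - st c A.
Proof. by case: c; rewrite /startr /ctr ?map_mxN linearN. Qed.

Lemma stZ c e m n (A : 'M[F]_(m, n)) : st c (sgn F e *: A) = sgn F e *: st c A.
Proof. by case: c; rewrite /startr /ctr ?map_mxZ /sgn ?rmorph_sign linearZ. Qed.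

Lemma st1 c m : st c (1%:M : 'M[F]_m) = 1%:M.
Proof. by case: c; rewrite /startr /ctr ?map_mx1 trmx1. Qed.

Lemma st_block c m1 m2 n1 n2 (A : 'M[F]_(m1, n1)) (B : 'M[F]_(m1, n2))
  (C : 'M[F]_(m2, n1)) (D : 'M[F]_(m2, n2)) :
  st c (block_mx A B C D) = block_mx (st c A) (st c C) (st c B) (st c D).
Proof. by case: c; rewrite /startr /ctr ?map_block_mx tr_block_mx. Qed.

Lemma st_row c m n1 n2 (A : 'M[F]_(m, n1)) (B : 'M[F]_(m, n2)) :
  st c (row_mx A B) = col_mx (st c A) (st c B).
Proof. by case: c; rewrite /startr /ctr ?map_row_mx tr_row_mx. Qed.

Lemma sgnK e : sgn F e * sgn F e = 1.
Proof. by rewrite /sgn -signr_addb addbb. Qed.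


Lemma quad_ge0 m (u : 'rV[F]_m) : 0 <= (u *m ctr cj u) 0 0.
Proof.
rewrite !mxE; apply: sumr_ge0 => j _; by rewrite !mxE.
Qed.

Lemma quad_eq0 m (u : 'rV[F]_m) : (u *m ctr cj u) 0 0 = 0 -> u = 0.
Proof.
rewrite !mxE => h; apply/matrixP => i j; rewrite (ord1 i) mxE.
have hge : forall k, predT k -> 0 <= u 0 k * ctr cj u k 0.
  by move=> k _; rewrite !mxE.
have := @psumr_eq0P _ _ _ _ hge h j isT.
rewrite !mxE => /eqP; rewrite mulf_eq0 => /orP [/eqP //|].
by move=> /eqP /(congr1 cj); rewrite cjK rmorph0.
Qed.

Lemma N_unit n (A B : 'M[F]_n) :
  ctr cj A *m A + ctr cj B *m B + 1%:M \in unitmx.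
Proof.
rewrite unitmxE unitfE; apply/negP => /det0P [v v0 hv].
have h : (v *m (ctr cj A *m A + ctr cj B *m B + 1%:M) *m ctr cj v) 0 0 = 0.
  by rewrite hv mul0mx mxE.
have e1 : v *m (ctr cj A *m A) *m ctr cj v
    = (v *m ctr cj A) *m ctr cj (v *m ctr cj A) by rewrite ctrM ctrK !mulmxA.
have e2 : v *m (ctr cj B *m B) *m ctr cj v
    = (v *m ctr cj B) *m ctr cj (v *m ctr cj B) by rewrite ctrM ctrK !mulmxA.
rewrite !mulmxDr !mulmxDl mulmx1 e1 e2 in h.
have addE (X Y : 'M[F]_1) : (X + Y) 0 0 = X 0 0 + Y 0 0 by rewrite mxE.
rewrite !addE in h.
have q1 := quad_ge0 (v *m ctr cj A).
have q2 := quad_ge0 (v *m ctr cj B).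
have q3 := quad_ge0 v.
have : (v *m ctr cj v) 0 0 = 0.
  apply/eqP; rewrite eq_le q3 andbT -h; apply: ler_wpDl => //; exact: addr_ge0.
by move/quad_eq0 => v00; rewrite v00 eqxx in v0.
Qed.

Lemma arr (V : zmodType) (a b k z1 z2 z3 v1 v2 v3 : V) :
  a + (z1 - v1) + (b + (z2 - v2)) + (k + (z3 - v3)) =
  (a + b + k + z1 + z2 + z3) - (v1 + v2 + v3).
Proof.
rewrite (addrACA a) (addrACA z1) (addrACA (a + b)) (addrACA (z1 + z2)).
by rewrite -!opprD -!addrA.
Qed.

Lemma gen35 : Theorem35 cj.
Proof.
move=> c e1 e2 p q M D K Xc Lc La Rm Q M22 D22 K22 Z1 Z2 Z3
  [HM HD HK] Hinv _ HX HR HQ1 HQ2 HM22 HD22 HK22 Q1 Q2 La2 Lc2 W S M12 D12 K12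
  dM dD dK.
have Pcol : startr cj c Q = col_mx (startr cj c Q1) (startr cj c Q2).
  by rewrite -[in LHS](hsubmxK Q) st_row.
have Q1R : Q1 *m Rm = Xc.
  by rewrite HX -[in RHS](hsubmxK Q) mul_row_col mulmx0 addr0.
have PX : startr cj c Q *m Xc = col_mx Rm 0 by rewrite HX mulmxA HQ1 mul1mx.
split.
  rewrite /invariant_pair.
  rewrite -[LHS]mul1mx -HQ2 -mulmxA.
  suff -> : startr cj c Q *m ((M + dM) *m Xc *m (La *m La) + (D + dD) *m Xc *m La
     + (K + dK) *m Xc) = 0 by rewrite mulmx0.
  have hA k (A : 'M_(p + q)) (Y : 'M_(p, k)) : startr cj c Q *m (A *m Xc *m Y)
     = col_mx (startr cj c Q1 *m A *m Xc *m Y) (startr cj c Q2 *m A *m Xc *m Y).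
    by rewrite Pcol !mulmxA !mul_col_mx.
  have hB k A B C D' (Y : 'M_(p, k)) : startr cj c Q *m
      ((Q *m block_mx A B C D' *m startr cj c Q) *m Xc *m Y)
     = col_mx (A *m Rm *m Y) (C *m Rm *m Y).
    rewrite !mulmxA HQ1 mul1mx -(mulmxA _ (startr cj c Q)) PX.
    by rewrite mul_block_col !mulmx0 !addr0 mul_col_mx.
  rewrite -[(K + dK) *m Xc]mulmx1 !mulmxDl !mulmxDr /dM /dD /dK !hB !hA.
  rewrite !add_col_mx -[0]col_mx0; congr col_mx.
    by rewrite !mulNmx -!(mulmxA _ Q1 Rm) Q1R !subrr !addr0.
  rewrite /M12 /D12 /K12 !mulmxKV // !mulmx1 !mulmxBl arr.
  have key : startr cj c Q2 *m M *m Xc *m La2 + startr cj c Q2 *m D *m Xc *m La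
     + startr cj c Q2 *m K *m Xc + Z1 *m La2 + Z2 *m La + Z3 = W.
    have h0 : startr cj c Q2 *m M *m Xc *m Lc2 + startr cj c Q2 *m D *m Xc *m Lc
       + startr cj c Q2 *m K *m Xc = 0.
      by move: Hinv; rewrite /invariant_pair => /(congr1 (mulmx (startr cj c Q2)));
        rewrite mulmx0 !mulmxDr !mulmxA.
    have -> : startr cj c Q2 *m K *m Xc = - (startr cj c Q2 *m M *m Xc *m Lc2
       + startr cj c Q2 *m D *m Xc *m Lc).
      by rewrite -[RHS]add0r -h0 [_ + startr _ _ Q2 *m K *m Xc]addrC addrK.
    by rewrite /W !mulmxBr opprD addrACA.
  have hS : W *m S *m ctr cj La2 *m La2 + W *m S *m ctr cj La *m La + W *m S = W.
    have : W *m S *m (ctr cj La2 *m La2 + ctr cj La *m La + 1%:M) = W.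
      by rewrite -mulmxA /S mulVmx ?N_unit // mulmx1.
    by rewrite !mulmxDr !mulmxA mulmx1.
  by rewrite key hS subrr.
have H e (X : 'M_(p + q)) (B : 'M_(q, p)) (C : 'M_q) :
    startr cj c X = sgn F e *: X -> startr cj c C = sgn F e *: C ->
    startr cj c (X + Q *m block_mx (- (startr cj c Q1 *m X *m Q1))
      (sgn F e *: startr cj c B) B C *m startr cj c Q)
    = sgn F e *: (X + Q *m block_mx (- (startr cj c Q1 *m X *m Q1))
      (sgn F e *: startr cj c B) B C *m startr cj c Q).
  move=> hX hC; rewrite stD hX scalerDr; congr (_ + _).
  rewrite !stM stK st_block scalemxAl scalemxAr scale_block_mx -mulmxA.
  rewrite -mulmxA; congr (_ *m (_ *m _)); congr block_mx.
  - rewrite stN !stM stK hX scalerN; congr (- _).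
    by rewrite -scalemxAr -scalemxAl mulmxA.
  - by rewrite scalerA sgnK scale1r.
  - by rewrite stZ stK.
  - exact: hC.
by split; apply: H.
Qed.
End Gen.

Theorem theorem3p5 (R : realType) :
  Theorem35 (fun x : R => x) /\ Theorem35 (fun z : R[i] => z^*).
Proof.
split.
- have := @gen35 R idfun (fun x => erefl) (fun x => ltac:(by rewrite /= -expr2 sqr_ge0)).
  exact.
- have := @gen35 R[i] conjc (@conjcK R) (@mulcJ_ge0 R).
  exact.
Qed.
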